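(* Let $\alpha=[a_0;a_1,\dots,a_r,\overline{b_1,\dots,b_s}]\in\widehat K$ with $r\ge1$, $s\ge1$, $a_0\in R$ and $a_1,\dots,a_r,b_1,\dots,b_s$ nonconstant polynomials in $R$, and let $\alpha^\sigma$ be its Galois conjugate over $K$. If $a_r\ne b_s$, then $h(\alpha)=|\alpha-\alpha^\sigma|^{-1}=q^{\,2\left(\sum_{i=1}^r\deg a_i\right)-\deg a_r-\deg b_s+\deg(a_r-b_s)}.$
   Context: $q$ is a positive power of a prime, $R=\mathbb F_q[Y]$, $K=\mathbb F_q(Y)$, $\widehat K=\mathbb F_q((Y^{-1}))$ with absolute value $|P/Q|=q^{\deg P-\deg Q}$ extended to $\widehat K$. $[a_0;a_1,a_2,\dots]$ denotes the continued fraction $a_0+1/(a_1+1/(a_2+\cdots))$ and an overline indicates a block repeated infinitely often. Such an eventually periodic expansion represents a quadratic power series over $K$. *)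

(* Defs.v *)
From HB Require Import structures.
From mathcomp Require Import all_boot all_order all_algebra.
From mathcomp Require Import fraction reals.
Set Implicit Arguments. Unset Strict Implicit. Unset Printing Implicit Defensive.
Import Order.TTheory GRing.Theory Num.Theory.
Local Open Scope ring_scope.

Definition tof (F : finFieldType) (p : {poly F}) : {fraction {poly F}} :=
  @FracField.tofrac _ p.

Section Khat.
Variables (F : finFieldType) (L : fieldType) (R : realType).
Variable emb : {rmorphism {fraction {poly F}} -> L}.
Variable av : L -> R.

(* q = #|F|, |P| = q ^ deg P *)
Definition qF : R := (#|F|)%:R.

Definition cauchy_seq (u : nat -> L) : Prop :=
  forall eps : R, 0 < eps -> exists N : nat,
    forall m n : nat, (N <= m)%N -> (N <= n)%N -> av (u m - u n) < eps.

Definition converges_to (u : nat -> L) (l : L) : Prop :=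
  forall eps : R, 0 < eps -> exists N : nat,
    forall n : nat, (N <= n)%N -> av (u n - l) < eps.

(* (L, av) together with emb : K -> L is a completion of K = F_q(Y) with
   respect to the absolute value |P/Q| = q^(deg P - deg Q), i.e. a model of
   \hat K = F_q((Y^{-1})) (unique up to isometric K-isomorphism). *)
Definition is_Khat : Prop :=
  (forall x, av x = 0 <-> x = 0) /\
  (forall x, 0 <= av x) /\
  (forall x y, av (x * y) = av x * av y) /\
  (forall x y, av (x + y) <= Num.max (av x) (av y)) /\
  (forall p : {poly F}, p != 0 -> av (emb (tof p)) = qF ^+ (size p).-1) /\
  (forall x eps, 0 < eps -> exists k, av (x - emb k) < eps) /\
  (forall u, cauchy_seq u -> exists l, converges_to u l).

Fixpoint cf_eval (s : seq L) : L :=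
  match s with
  | [::] => 0
  | [:: x] => x
  | x :: t => x + (cf_eval t)^-1
  end.

Definition convergent (a : nat -> {poly F}) (n : nat) : L :=
  cf_eval [seq emb (tof (a i)) | i <- iota 0 n.+1].

Definition cf_value (a : nat -> {poly F}) (alpha : L) : Prop :=
  converges_to (convergent a) alpha.

Definition inK (x : L) : Prop := exists k, x = emb k.

(* alphas is the Galois conjugate of alpha over K (alpha of degree <= 2):
   alphas = alpha if alpha is in K, otherwise alpha and alphas are the two
   roots (with multiplicity) of the minimal polynomial X^2 + c1 X + c0. *)
Definition galois_conj (alpha alphas : L) : Prop :=
  (inK alpha /\ alphas = alpha) \/
  (~ inK alpha /\ exists c1 c0 : {fraction {poly F}},
      [/\ alpha ^+ 2 + emb c1 * alpha + emb c0 = 0,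
          alphas ^+ 2 + emb c1 * alphas + emb c0 = 0
        & alpha + alphas = - emb c1]).

End Khat.

(* partial quotients of [a0; a_1, ..., a_r, overline(b_1, ..., b_s)] *)
Definition pq (F : finFieldType) (a0 : {poly F}) (as_ bs : seq {poly F})
  (n : nat) : {poly F} :=
  if n == 0%N then a0
  else if (n <= size as_)%N then nth 0 as_ n.-1
  else nth 0 bs ((n.-1 - size as_) %% size bs).

Definition nonconst (F : finFieldType) (p : {poly F}) : bool := (1 < size p)%N.

Definition pdeg (F : finFieldType) (p : {poly F}) : int := (size p).-1%:Z.

(* Main.v *)
Require Import Defs.
From HB Require Import structures.
From mathcomp Require Import all_boot all_order all_algebra.
From mathcomp Require Import fraction reals.
From mathcomp Require Import ring.
Import Order.TTheory GRing.Theory Num.Theory.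
Local Open Scope ring_scope.
Set Implicit Arguments. Unset Strict Implicit. Unset Printing Implicit Defensive.

Lemma frac_repr (F : fieldType) (k : {fraction {poly F}}) :
  exists u w, w != 0 /\ k = FracField.tofrac u / FracField.tofrac w.
Proof.
elim/quotW: k => x.
exists (x.1), (x.2); split; first exact: denom_ratioP.
have -> : FracField.tofrac x.1 / FracField.tofrac x.2 = FracField.mul (FracField.tofrac x.1) (FracField.inv (FracField.tofrac x.2)) by [].
rewrite !piE.
apply/eqmodP => /=.
rewrite FracField.equivfE /FracField.mulf /FracField.invf /=.
rewrite !numden_Ratio ?oner_neq0 ?mulf_neq0 ?denom_ratioP //.
rewrite mul1r mulr1 mulrC //.
all: by rewrite ?oner_eq0.
Qed.

Section Main.
Variables (F : finFieldType) (L : fieldType) (R : realType).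
Variable emb : {rmorphism {fraction {poly F}} -> L}.
Variable av : L -> R.
Hypothesis HK : is_Khat emb av.

Local Notation v := av.
Definition e (p : {poly F}) : L := emb (tof p).
Local Notation qq := (qF F R).

Lemma v_eq0 x : v x = 0 <-> x = 0. Proof. by case: HK. Qed.
Lemma v_ge0 x : 0 <= v x. Proof. by case: HK => _ []. Qed.
Lemma vM x y : v (x * y) = v x * v y. Proof. by case: HK => _ [] _ []. Qed.
Lemma vU x y : v (x + y) <= Num.max (v x) (v y). Proof. by case: HK => _ [] _ [] _ []. Qed.
Lemma ve p : p != 0 -> v (e p) = qq ^+ (size p).-1.
Proof. by case: HK => _ [] _ [] _ [] _ [] H _; apply: H. Qed.
Lemma v0 : v 0 = 0. Proof. by apply/v_eq0. Qed.
Lemma v_neq0 x : x != 0 -> v x != 0.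
Proof. by move=> nx; apply/eqP => /v_eq0 /eqP; apply/negP. Qed.
Lemma v_gt0 x : x != 0 -> 0 < v x.
Proof. by move=> nx; rewrite lt_def v_neq0 // v_ge0. Qed.

Lemma e0 : e 0 = 0. Proof. by rewrite /e /tof tofrac0 rmorph0. Qed.
Lemma e1 : e 1 = 1. Proof. by rewrite /e /tof tofrac1 rmorph1. Qed.
Lemma eB p r : e (p - r) = e p - e r. Proof. by rewrite /e /tof tofracB rmorphB. Qed.
Lemma eD p r : e (p + r) = e p + e r. Proof. by rewrite /e /tof tofracD rmorphD. Qed.
Lemma eM p r : e (p * r) = e p * e r. Proof. by rewrite /e /tof tofracM rmorphM. Qed.
Lemma e_eq0 p : (e p == 0) = (p == 0).
Proof. by rewrite /e /tof fmorph_eq0 tofrac_eq0. Qed.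

Lemma v1 : v 1 = 1.
Proof. by rewrite -e1 ve ?oner_eq0 // size_poly1 expr0. Qed.
Lemma vN1 : v (-1) = 1.
Proof.
have h : v (-1) * v (-1) = 1 by rewrite -vM mulrNN mulr1 v1.
have h0 := v_ge0 (-1).
have : (v (-1) - 1) * (v (-1) + 1) = 0 by rewrite mulrDr !mulrBl h; ring.
move/eqP; rewrite mulf_eq0 => /orP [|]; first by rewrite subr_eq0 => /eqP.
move=> /eqP H; exfalso.
have H' : v (-1) = - 1 by rewrite -(addrK 1 (v (-1))) H sub0r.
by move: h0; rewrite H' oppr_ge0 ler10.
Qed.
Lemma vN x : v (- x) = v x. Proof. by rewrite -mulN1r vM vN1 mul1r. Qed.
Lemma vBC x y : v (x - y) = v (y - x). Proof. by rewrite -vN opprB. Qed.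
Lemma vV x : v (x^-1) = (v x)^-1.
Proof.
have [->|nx] := eqVneq x 0; first by rewrite invr0 v0 invr0.
have : v x * v x^-1 = 1 by rewrite -vM mulfV // v1.
move=> h; rewrite -[v x^-1]mul1r -(mulVf (v_neq0 nx)) -mulrA h mulr1 //.
Qed.
Lemma vdiv x y : v (x / y) = v x / v y. Proof. by rewrite vM vV. Qed.

Lemma vD_lt x y c : v x < c -> v y < c -> v (x + y) < c.
Proof.
move=> hx hy; apply: le_lt_trans (vU x y) _.
by rewrite gt_max hx hy.
Qed.
Lemma vD_le x y c : v x <= c -> v y <= c -> v (x + y) <= c.
Proof.
move=> hx hy; apply: le_trans (vU x y) _.
by rewrite ge_max hx hy.
Qed.

Lemma vstrict x y : v x < v y -> v (x + y) = v y.
Proof.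
move=> hxy; apply/eqP; rewrite eq_le; apply/andP; split.
  by apply: vD_le; [exact: ltW | exact: lexx].
rewrite leNgt; apply/negP => H.
have hy : v ((x + y) + - x) < v y by apply: vD_lt => //; rewrite vN.
have E : (x + y) + - x = y by ring.
by rewrite E ltxx in hy.
Qed.

Lemma q_gt1 : 1 < qq.
Proof. by rewrite /qF ltr1n card_finNzRing_gt1. Qed.
Lemma q_gt0 : 0 < qq. Proof. exact: lt_trans ltr01 q_gt1. Qed.
Lemma q_neq0 : qq != 0. Proof. by rewrite gt_eqF // q_gt0. Qed.

Definition big (x : L) := 1 < v x.

Lemma big_neq0 x : big x -> x != 0.
Proof. by rewrite /big; apply: contraTneq => ->; rewrite v0 ltr10. Qed.

Lemma e_big p : nonconst p -> big (e p).
Proof.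
rewrite /nonconst /big => hp.
have p0 : p != 0 by rewrite -size_poly_gt0; apply: ltn_trans hp.
rewrite ve //; rewrite expr_gt1; first exact: q_gt1.
  by case: (size p) hp => // [] [].
exact: ltW q_gt0.
Qed.

Lemma vV_lt1 x : big x -> v x^-1 < 1.
Proof.
rewrite /big vV => h; rewrite invf_lt1 //; exact: lt_trans ltr01 h.
Qed.

Lemma small0 (x : R) : 0 <= x -> (forall eps, 0 < eps -> x < eps) -> x = 0.
Proof.
move=> h0 h; apply/eqP; rewrite eq_le h0 andbT leNgt; apply/negP => hx.
by have := h x hx; rewrite ltxx.
Qed.

Lemma lim_unique u l1 l2 : converges_to av u l1 -> converges_to av u l2 -> l1 = l2.
Proof.
move=> h1 h2; apply/eqP; rewrite -subr_eq0; apply/eqP/v_eq0.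
apply: small0 (v_ge0 _) _ => eps heps.
have [N1 HN1] := h1 eps heps; have [N2 HN2] := h2 eps heps.
have -> : l1 - l2 = (u (maxn N1 N2) - l2) + - (u (maxn N1 N2) - l1) by ring.
apply: vD_lt; first by apply: HN2; rewrite leq_maxr.
by rewrite vN; apply: HN1; rewrite leq_maxl.
Qed.

Lemma cf_value_ext a b x : (forall n, a n = b n) -> cf_value emb av a x -> cf_value emb av b x.
Proof.
move=> hab; rewrite /cf_value /converges_to => h eps heps.
have [N HN] := h eps heps; exists N => n hn.
have <- : convergent emb a n = convergent emb b n.
  by rewrite /convergent; congr cf_eval; apply: eq_map => i; rewrite hab.
exact: HN.
Qed.

Lemma cf_cons (x : L) l : l != [::] -> cf_eval (x :: l) = x + (cf_eval l)^-1.
Proof. by case: l. Qed.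

Lemma cf_big x l : all big (x :: l) -> v (cf_eval (x :: l)) = v x.
Proof.
elim: l x => [//|y l IH] x /andP [hx hl].
rewrite cf_cons // addrC vstrict //.
apply: (lt_trans _ hx); apply: vV_lt1.
by rewrite /big IH //; case/andP: hl.
Qed.

Lemma map_iotaS (T : Type) (f : nat -> T) m :
  [seq f i | i <- iota 0 m.+1] = f 0%N :: [seq f i.+1 | i <- iota 0 m].
Proof. by rewrite /= (iotaDl 1 0) -map_comp. Qed.

Lemma convS a n : convergent emb a n.+1 =
  e (a 0%N) + (convergent emb (fun k => a k.+1) n)^-1.
Proof. by rewrite /convergent map_iotaS cf_cons. Qed.

Definition ncf (a : nat -> {poly F}) := forall n, (0 < n)%N -> nonconst (a n).

Lemma shift1 a x : ncf a -> cf_value emb av a x ->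
  exists x1, [/\ cf_value emb av (fun n => a n.+1) x1,
     x = e (a 0%N) + x1^-1 & v x1 = v (e (a 1%N))].
Proof.
move=> ha hx.
set c := convergent emb (fun k => a k.+1).
set Vq := v (e (a 1%N)).
have Vq1 : 1 < Vq by apply: e_big; apply: ha.
have Vq0 : 0 < Vq by apply: lt_trans ltr01 Vq1.
have hc : forall n, v (c n) = Vq.
  move=> n; rewrite /c /convergent map_iotaS cf_big //=.
  apply/andP; split; first by apply: e_big; apply: ha.
  by apply/allP => y /mapP [i _ ->]; apply: e_big; apply: ha.
have c0 : forall n, c n != 0.
  by move=> n; apply/eqP => /v_eq0 h; move: (hc n); rewrite h => /eqP; rewrite eq_sym gt_eqF.
set g := x - e (a 0%N).
have hg : forall n, convergent emb a n.+1 - x = (c n)^-1 - g.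
  by move=> n; rewrite convS /g -/c; ring.
have vg : v g = Vq^-1.
  have hV : 0 < Vq^-1 by rewrite invr_gt0.
  have [N HN] := hx Vq^-1 hV.
  have := HN N.+1 (leqnSn N); rewrite hg => H.
  have -> : g = (g - (c N)^-1) + (c N)^-1 by ring.
  rewrite vstrict vV hc //.
  by rewrite vBC.
have g0 : g != 0.
  by apply/eqP => /v_eq0 h; move: vg; rewrite h => /eqP; rewrite eq_sym invr_eq0 gt_eqF.
exists g^-1; split; last by rewrite vV vg invrK.
- move=> eps heps.
  have heps' : 0 < eps / (Vq * Vq) by rewrite divr_gt0 // mulr_gt0.
  have [N HN] := hx _ heps'; exists N => n hn.
  have := HN n.+1 (leqW hn); rewrite hg => H.
  have -> : c n - g^-1 = c n * g^-1 * (g - (c n)^-1).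
    by field; rewrite g0 c0.
  rewrite !vM vV vg invrK hc vBC.
  rewrite -(ltr_pM2l (mulr_gt0 Vq0 Vq0)) [X in _ < X]mulrC divfK in H; last first.
    by rewrite mulf_neq0 // gt_eqF.
  exact: H.
- by rewrite invrK /g; ring.
Qed.

Lemma ncf_shift a : ncf a -> ncf (fun n => a n.+1) /\ forall n, nonconst (a n.+1).
Proof. by move=> ha; split=> [n _|n]; apply: ha. Qed.

Lemma shiftN m : forall a x, ncf a -> cf_value emb av a x ->
  exists y, cf_value emb av (fun n => a (n + m)%N) y /\
    x = cf_eval ([seq e (a i) | i <- iota 0 m] ++ [:: y]).
Proof.
elim: m => [|m IH] a x ha hx.
  by exists x; split => //; apply: cf_value_ext hx => n; rewrite addn0.
have [x1 [h1 -> _]] := shift1 ha hx.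
have [y [hy ->]] := IH _ _ (ncf_shift ha).1 h1.
exists y; split; first by apply: cf_value_ext hy => n; rewrite addnS.
by rewrite map_iotaS cat_cons cf_cons //; case: (iota 0 m).
Qed.

Lemma cf_value_v a x : (forall n, nonconst (a n)) -> cf_value emb av a x ->
  v x = v (e (a 0%N)).
Proof.
move=> ha hx.
have [x1 [_ -> h1]] := shift1 (fun n _ => ha n) hx.
rewrite addrC vstrict //; apply: lt_trans (e_big (ha 0%N)).
by apply: vV_lt1; rewrite /big h1; apply: e_big.
Qed.

Lemma v_lt_size (p r : {poly F}) : p != 0 -> r != 0 -> v (e p) < v (e r) -> (size p < size r)%N.
Proof.
move=> p0 r0; rewrite !ve // ltr_eXn2l ?q_gt1 //.
by rewrite -!subn1 ltn_sub2rE // size_poly_gt0.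
Qed.

Lemma irr n : forall a x (u w : {poly F}), ncf a -> cf_value emb av a x -> w != 0 ->
  (size w <= n)%N -> x != e u / e w.
Proof.
elim: n => [|n IH] a x u w ha hx w0 hw.
  by move: hw; rewrite leqn0 size_poly_eq0 (negbTE w0).
apply/eqP => hxu.
have [x1 [h1 hx1 vx1]] := shift1 ha hx.
have big1 : big x1 by rewrite /big vx1; apply: e_big; apply: ha.
have x10 := big_neq0 big1.
set u' := u - a 0%N * w.
have ew0 : e w != 0 by rewrite e_eq0.
have E : x - e (a 0%N) = e u' / e w.
  by rewrite /u' eB eM hxu; field.
have E1 : x - e (a 0%N) = x1^-1 by rewrite hx1; ring.
have eu0 : e u' != 0.
  apply/eqP => h; move: E; rewrite h mul0r E1 => /eqP; rewrite invr_eq0.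
  by rewrite (negbTE x10).
have u0 : u' != 0 by rewrite -e_eq0.
have hlt : v (e u') < v (e w).
  have : v (e u') = v (x - e (a 0%N)) * v (e w).
    by rewrite E vM vV mulfVK // v_neq0.
  move=> ->; rewrite E1 -[X in _ < X]mul1r ltr_pM2r ?v_gt0 //.
  exact: vV_lt1.
have hs := v_lt_size u0 w0 hlt.
have := IH _ _ w u' (ncf_shift ha).1 h1 u0.
rewrite -ltnS; move/(_ (leq_trans hs hw)) => /eqP; apply.
by rewrite -[x1]invrK -E1 E invf_div.
Qed.

Lemma notK a x : ncf a -> cf_value emb av a x -> ~ inK emb x.
Proof.
move=> ha hx [k hk].
have [u [w [w0 hkuw]]] := frac_repr k.
have := @irr (size w) a x u w ha hx w0 (leqnn _).
by rewrite hk hkuw fmorph_div /e /tof eqxx.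
Qed.

Lemma inK_e p : inK emb (e p). Proof. by exists (tof p). Qed.
Lemma inK0 : inK emb 0. Proof. by exists 0; rewrite rmorph0. Qed.
Lemma inK1 : inK emb 1. Proof. by exists 1; rewrite rmorph1. Qed.
Lemma inKD x y : inK emb x -> inK emb y -> inK emb (x + y).
Proof. by move=> [a ->] [b ->]; exists (a + b); rewrite rmorphD. Qed.
Lemma inKM x y : inK emb x -> inK emb y -> inK emb (x * y).
Proof. by move=> [a ->] [b ->]; exists (a * b); rewrite rmorphM. Qed.
Lemma inKN x : inK emb x -> inK emb (- x).
Proof. by move=> [a ->]; exists (- a); rewrite rmorphN. Qed.
Lemma inKV x : inK emb x -> inK emb (x^-1).
Proof. by move=> [a ->]; exists (a^-1); rewrite fmorphV. Qed.

Lemma lin c d x : inK emb c -> inK emb d -> ~ inK emb x -> c * x + d = 0 ->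
  c = 0 /\ d = 0.
Proof.
move=> hc hd hx h.
have c0 : c = 0.
  apply/eqP; apply/negP => /negP c0; apply: hx.
  have -> : x = - d / c.
    by apply: (mulIf c0); rewrite mulfVK //; apply/eqP; rewrite -addr_eq0 mulrC h.
  by apply: inKM; [apply: inKN | apply: inKV].
by split => //; move: h; rewrite c0 mul0r add0r.
Qed.


Record M4 := Mk { m11 : L; m12 : L; m21 : L; m22 : L }.

Fixpoint cm (l : seq L) : M4 :=
  match l with
  | [::] => Mk 1 0 0 1
  | x :: l' => Mk (x * m11 (cm l') + m21 (cm l')) (x * m12 (cm l') + m22 (cm l'))
                  (m11 (cm l')) (m12 (cm l'))
  end.

Lemma cm_rcons l x : cm (l ++ [:: x]) =
  Mk (m11 (cm l) * x + m12 (cm l)) (m11 (cm l)) (m21 (cm l) * x + m22 (cm l)) (m21 (cm l)).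
Proof.
elim: l => [|y l IH] /=; first by congr Mk; ring.
by rewrite IH /=; congr Mk; ring.
Qed.

Lemma cm_det l : m11 (cm l) * m22 (cm l) - m12 (cm l) * m21 (cm l) = 1 \/
                 m11 (cm l) * m22 (cm l) - m12 (cm l) * m21 (cm l) = -1.
Proof.
elim: l => [|y l IH] /=; first by left; ring.
have E : (y * m11 (cm l) + m21 (cm l)) * m12 (cm l) - (y * m12 (cm l) + m22 (cm l)) * m11 (cm l)
   = - (m11 (cm l) * m22 (cm l) - m12 (cm l) * m21 (cm l)) by ring.
rewrite E; case: IH => ->; [right | left]; ring.
Qed.

Lemma v_det l : v (m11 (cm l) * m22 (cm l) - m12 (cm l) * m21 (cm l)) = 1.
Proof. by case: (cm_det l) => ->; rewrite ?vN1 ?v1. Qed.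

Lemma cm_inv l : all big l ->
  [/\ v (m11 (cm l)) = \prod_(x <- l) v x, v (m12 (cm l)) < v (m11 (cm l)),
      v (m21 (cm l)) < v (m11 (cm l)) & v (m22 (cm l)) <= v (m11 (cm l))].
Proof.
elim: l => [|x l IH] /=.
  by rewrite big_nil v1 v0; split.
move=> /andP [hx hl]; have [h1 h2 h3 h4] := IH hl.
set P := v (m11 (cm l)).
have P0 : 0 < P by apply: le_lt_trans (v_ge0 _) h3.
have hxP : P < v x * P by rewrite -[X in X < _]mul1r ltr_pM2r.
have E1 : v (x * m11 (cm l) + m21 (cm l)) = v x * P.
  rewrite addrC vstrict vM //.
  exact: lt_trans h3 hxP.
rewrite E1 big_cons -h1; split => //.
- apply: vD_lt; first by rewrite vM ltr_pM2l //; apply: lt_trans ltr01 hx.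
  exact: le_lt_trans h4 hxP.
- exact: ltW (lt_trans h2 hxP).
Qed.

Lemma cm_inK s : [/\ inK emb (m11 (cm (map e s))), inK emb (m12 (cm (map e s))),
    inK emb (m21 (cm (map e s))) & inK emb (m22 (cm (map e s)))].
Proof.
elim: s => [|x s [h1 h2 h3 h4]] /=; first by split; [apply: inK1|apply: inK0|apply: inK0|apply: inK1].
by split => //; apply: inKD => //; apply: inKM => //; apply: inK_e.
Qed.

Lemma cm_step x l t : cf_eval (l ++ [:: t]) != 0 ->
  cf_eval (l ++ [:: t]) = (m11 (cm l) * t + m12 (cm l)) / (m21 (cm l) * t + m22 (cm l)) ->
  cf_eval (x :: l ++ [:: t]) = (m11 (cm (x :: l)) * t + m12 (cm (x :: l))) /
                                (m21 (cm (x :: l)) * t + m22 (cm (x :: l))).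
Proof.
move=> c0 hc; rewrite cf_cons; last by case: l {c0 hc}.
have N0 : m11 (cm l) * t + m12 (cm l) != 0.
  by apply: contraNneq c0 => h; rewrite hc h mul0r.
rewrite hc invf_div /=; field; exact: N0.
Qed.

Lemma cm_eval0 l t : all big l -> big t ->
  big (cf_eval (l ++ [:: t])) /\
  cf_eval (l ++ [:: t]) = (m11 (cm l) * t + m12 (cm l)) / (m21 (cm l) * t + m22 (cm l)).
Proof.
elim: l => [|x l IH].
  by move=> _ ht /=; split => //; rewrite !mul1r !mul0r addr0 add0r divr1.
move=> /andP [hx hl] ht; have [hb hc] := IH hl ht.
split; last by apply: cm_step => //; apply: big_neq0.
rewrite cf_cons; last by case: l {IH hb hc hl}.
by rewrite /big addrC vstrict //; apply: lt_trans (vV_lt1 hb) hx.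
Qed.

Lemma cm_eval x l t : all big l -> big t ->
  cf_eval (x :: l ++ [:: t]) = (m11 (cm (x :: l)) * t + m12 (cm (x :: l))) /
                                (m21 (cm (x :: l)) * t + m22 (cm (x :: l))).
Proof.
move=> hl ht; have [hb hc] := cm_eval0 hl ht.
by apply: cm_step => //; apply: big_neq0.
Qed.


Lemma all_big_e s : all (@nonconst F) s -> all big (map e s).
Proof. by move=> hs; rewrite all_map; apply: sub_all hs => x /= /e_big. Qed.

Lemma prod_pow s : all (@nonconst F) s ->
  \prod_(x <- map e s) v x = qq ^ (\sum_(x <- s) pdeg x).
Proof.
rewrite big_map; elim: s => [|x s IH] /=; first by rewrite !big_nil expr0z.
move=> /andP [hx hs]; rewrite !big_cons IH // expfzDr ?q_neq0 //.
have x0 : x != 0 by rewrite -size_poly_gt0; apply: ltn_trans hx.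
by rewrite ve // exprnP.
Qed.

Lemma cm_v11_gt0 l : all big l -> 0 < v (m11 (cm l)).
Proof. by move=> hl; have [_ _ h _] := cm_inv hl; apply: le_lt_trans (v_ge0 _) h. Qed.

Lemma cm_m11_neq0 l : all big l -> m11 (cm l) != 0.
Proof. by move=> hl; apply/eqP => h; move: (cm_v11_gt0 hl); rewrite h v0 ltxx. Qed.

Lemma rcons_ex (T : Type) (s : seq T) : (0 < size s)%N -> exists s' x, s = rcons s' x.
Proof. by case/lastP: s => // s' x _; exists s', x. Qed.
Lemma cons_ex (T : Type) (s : seq T) : (0 < size s)%N -> exists x s', s = x :: s'.
Proof. by case: s => // x s' _; exists x, s'. Qed.
Lemma vpos_neq0 x : 0 < v x -> x != 0.
Proof. by apply: contraTneq => ->; rewrite v0 ltxx. Qed.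

Lemma main (a0 : {poly F}) (as_ bs : seq {poly F})
  (Hr : (1 <= size as_)%N) (Hs : (1 <= size bs)%N)
  (Has : all (@nonconst F) as_) (Hbs : all (@nonconst F) bs)
  (alpha alphas : L)
  (Halpha : cf_value emb av (pq a0 as_ bs) alpha)
  (Hconj : galois_conj emb alpha alphas)
  (Hne : last 0 as_ != last 0 bs) :
  (av (alpha - alphas))^-1 =
    (#|F|%:R : R) ^ (2 * (\sum_(p <- as_) pdeg p) - pdeg (last 0 as_)
              - pdeg (last 0 bs) + pdeg (last 0 as_ - last 0 bs)).
Proof.
set r := size as_; set s := size bs.
set a := pq a0 as_ bs.
have s0 : (0 < s)%N by [].
have ha : ncf a.
  move=> n n0; rewrite /a /pq (gtn_eqF n0); case: ifP => hn.
    by apply: (allP Has); apply: mem_nth; rewrite -ltnS prednK.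
  by apply: (allP Hbs); apply: mem_nth; rewrite ltn_pmod.
have [beta [hbeta halpha]] := shiftN (r.+1) ha Halpha.
set b := fun n => nth 0 bs (n %% s).
have hb : forall n, a (n + r.+1)%N = b n.
  move=> n; rewrite /a /pq addnS /= ifF; last by rewrite ltnNge leq_addl.
  by rewrite addnK.
have hbb : cf_value emb av b beta by apply: cf_value_ext hbeta.
have nb : forall n, nonconst (b n).
  by move=> n; apply: (allP Hbs); apply: mem_nth; rewrite ltn_pmod.
have ncfb : ncf b by move=> n _; apply: nb.
have [beta2 [hbeta2 hbeta2e]] := shiftN s ncfb hbb.
have Eb2 : beta2 = beta.
  apply: lim_unique hbeta2 _; apply: cf_value_ext hbb => n.
  by rewrite /b modnDr.
have Emb : [seq e (b i) | i <- iota 0 s] = map e bs.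
  have -> : [seq e (b i) | i <- iota 0 s] = map e [seq b i | i <- iota 0 s] by rewrite -map_comp.
  congr map; rewrite -[RHS](mkseq_nth 0 bs) /mkseq; apply/eq_in_map => i.
  by rewrite mem_iota => /andP [_ hi]; rewrite /b modn_small.
have Ema : [seq e (a i) | i <- iota 0 r.+1] = e a0 :: map e as_.
  rewrite map_iotaS; congr cons.
  rewrite -[in RHS](mkseq_nth 0 as_) /mkseq -map_comp; apply/eq_in_map => i.
  by rewrite mem_iota => /andP [_ hi]; rewrite /= /a /pq /= hi.
rewrite Eb2 Emb in hbeta2e; rewrite Ema in halpha.
have bigAs := all_big_e Has.
have bigBs := all_big_e Hbs.
have vbeta : v beta = v (e (b 0%N)) by apply: cf_value_v hbb.
have bigbeta : big beta by rewrite /big vbeta; apply: e_big.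
have beta0 := big_neq0 bigbeta.
have hbeq := (cm_eval0 bigBs bigbeta).2; rewrite -hbeta2e in hbeq.
have haeq := cm_eval (e a0) bigAs bigbeta; rewrite -halpha in haeq.
have [as' [ar Eas]] := rcons_ex Hr.
have [bs' [bl Ebs]] := rcons_ex Hs.
have [b1 [bt Ebs1]] := cons_ex Hs.
have Ear : last 0 as_ = ar by rewrite Eas last_rcons.
have Ebl : last 0 bs = bl by rewrite Ebs last_rcons.
rewrite Ear Ebl in Hne |- *.
have nar : nonconst ar by apply: (allP Has); rewrite Eas mem_rcons mem_head.
have nbl : nonconst bl by apply: (allP Hbs); rewrite Ebs mem_rcons mem_head.
have nb1 : nonconst b1 by apply: (allP Hbs); rewrite Ebs1 mem_head.
have hasp : all (@nonconst F) as' by move: Has; rewrite Eas all_rcons => /andP [].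
have hbsp : all (@nonconst F) bs' by move: Hbs; rewrite Ebs all_rcons => /andP [].
have hbt : all (@nonconst F) bt by move: Hbs; rewrite Ebs1 /= => /andP [].
have bigAs' := all_big_e hasp.
have bigBs' := all_big_e hbsp.
have [hB1 hB2 hB3 hB4] := cm_inv bigBs'.
have [hA'1 hA'2 hA'3 hA'4] := cm_inv bigAs'.
have [hA1 hA2 hA3 hA4] := cm_inv bigAs.
have EP : m11 (cm [seq e i | i <- bs]) = m11 (cm (map e bs')) * e bl + m12 (cm (map e bs')).
  by rewrite Ebs map_rcons -cats1 cm_rcons.
have EP' : m12 (cm [seq e i | i <- bs]) = m11 (cm (map e bs')).
  by rewrite Ebs map_rcons -cats1 cm_rcons.
have EQ' : m22 (cm [seq e i | i <- bs]) = m21 (cm (map e bs')).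
  by rewrite Ebs map_rcons -cats1 cm_rcons.
have EQ : m21 (cm [seq e i | i <- bs]) = m11 (cm (map e bt)) by rewrite Ebs1.
have P'0 : m11 (cm (map e bs')) != 0 := cm_m11_neq0 bigBs'.
have Q0 : m21 (cm [seq e i | i <- bs]) != 0.
  by rewrite EQ; apply: cm_m11_neq0; apply: all_big_e.
have EAq1 : m11 (cm [seq e i | i <- as_]) = m11 (cm (map e as')) * e ar + m12 (cm (map e as')).
  by rewrite Eas map_rcons -cats1 cm_rcons.
have EAq2 : m12 (cm [seq e i | i <- as_]) = m11 (cm (map e as')).
  by rewrite Eas map_rcons -cats1 cm_rcons.
have vbeta1 : v beta = v (e b1) by rewrite vbeta /b mod0n Ebs1.
set P := m11 (cm [seq e i | i <- bs]).
set P' := m12 (cm [seq e i | i <- bs]).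
set Q := m21 (cm [seq e i | i <- bs]).
set Q' := m22 (cm [seq e i | i <- bs]).
have D0 : Q * beta + Q' != 0.
  apply/eqP => h; move: hbeq; rewrite h invr0 mulr0 => /eqP; by rewrite (negbTE beta0).
have Qb : Q * beta ^+ 2 + (Q' - P) * beta - P' = 0.
  have H1 : beta * (Q * beta + Q') = P * beta + P' by rewrite {1}hbeq divfK.
  have -> : Q * beta ^+ 2 + (Q' - P) * beta - P' = beta * (Q * beta + Q') - (P * beta + P') by ring.
  by rewrite H1 subrr.
set d := (P - Q') / P' + beta^-1.
have hd1 : v (d - e bl) < 1.
  have E : d - e bl = (m12 (cm (map e bs')) - m21 (cm (map e bs'))) / m11 (cm (map e bs')) + beta^-1.
    rewrite /d /P /P' /Q' EP EP' EQ'.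
    by field; rewrite ?beta0 ?P'0.
  rewrite E; apply: vD_lt; last exact: vV_lt1 bigbeta.
  rewrite vdiv ltr_pdivrMr ?mul1r; last exact: cm_v11_gt0 bigBs'.
  by apply: vD_lt => //; rewrite vN.
have hdv : v d = v (e bl).
  have -> : d = (d - e bl) + e bl by ring.
  by rewrite vstrict //; apply: lt_trans hd1 (e_big nbl).
have bigd : big d by rewrite /big hdv; apply: e_big.
have d0 := big_neq0 bigd.
have P'0' : P' != 0 by rewrite /P' EP'.
set beta' := - d^-1.
have Qb' : Q * beta' ^+ 2 + (Q' - P) * beta' - P' = 0.
  have W0 : d * beta * P' - ((P - Q') * beta + P') = 0 by rewrite /d; field; rewrite ?beta0 ?P'0 ?P'0' ?d0 ?qb0 ?qb'0 ?D0.
  have T0 : Q + (P - Q') * d - P' * d ^+ 2 = 0.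
    apply: (mulIf (expf_neq0 2 beta0)); rewrite mul0r.
    have -> : (Q + (P - Q') * d - P' * d ^+ 2) * beta ^+ 2 =
      (Q * beta ^+ 2 + (Q' - P) * beta - P') - (d * beta + 1) * (d * beta * P' - ((P - Q') * beta + P')) by ring.
    by rewrite Qb W0 mulr0 subr0.
  have -> : Q * beta' ^+ 2 + (Q' - P) * beta' - P' = (Q + (P - Q') * d - P' * d ^+ 2) / d ^+ 2.
    by rewrite /beta'; field; rewrite ?beta0 ?P'0 ?P'0' ?d0 ?qb0 ?qb'0 ?D0.
  by rewrite T0 mul0r.
have vbeta' : v beta' = (v d)^-1 by rewrite vN vV.
have vbeta'1 : v beta' < 1 by rewrite /beta' vN; apply: vV_lt1.
set p := m11 (cm (e a0 :: [seq e i | i <- as_])).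
set p' := m12 (cm (e a0 :: [seq e i | i <- as_])).
set q := m21 (cm (e a0 :: [seq e i | i <- as_])).
set q' := m22 (cm (e a0 :: [seq e i | i <- as_])).
have Eq : q = m11 (cm [seq e i | i <- as_]) by [].
have Eq' : q' = m12 (cm [seq e i | i <- as_]) by [].
have vq0 : 0 < v q by rewrite Eq; apply: cm_v11_gt0.
have hq'q : v q' < v q by rewrite Eq Eq'.
have vqb : v (q * beta + q') = v q * v beta.
  rewrite addrC vstrict vM //; apply: (lt_trans hq'q).
  by rewrite -[X in X < _]mulr1 ltr_pM2l.
have qb0 : q * beta + q' != 0.
  by apply: vpos_neq0; rewrite vqb mulr_gt0 // v_gt0.
have vW1 : 1 <= v (e (ar - bl)).
  have h0 : ar - bl != 0 by rewrite subr_eq0.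
  by rewrite ve // exprn_ege1 // ltW // q_gt1.
have vdar : v (d - e ar) = v (e (ar - bl)).
  have -> : d - e ar = (d - e bl) + - e (ar - bl) by rewrite eB; ring.
  by rewrite vstrict ?vN //; apply: lt_le_trans hd1 vW1.
have vqb' : v (q * beta' + q') = v (m11 (cm (map e as'))) * v (e (ar - bl)) / v d.
  have E1 : q * beta' + q' = (m11 (cm (map e as')) * (d - e ar) - m12 (cm (map e as'))) / d.
    by rewrite Eq Eq' EAq1 EAq2 /beta'; field; rewrite ?beta0 ?P'0 ?P'0' ?d0 ?qb0 ?qb'0 ?D0.
  have hlt : v (- m12 (cm (map e as'))) < v (m11 (cm (map e as')) * (d - e ar)).
    rewrite vN vM vdar; apply: lt_le_trans hA'2 _.
    by rewrite -[X in X <= _]mulr1 ler_wpM2l // v_ge0.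
  by rewrite E1 vdiv addrC vstrict // vM vdar.
have qb'0 : q * beta' + q' != 0.
  apply: vpos_neq0; rewrite vqb'; apply: divr_gt0; last exact: v_gt0 d0.
  apply: mulr_gt0; first exact: cm_v11_gt0 bigAs'.
  exact: lt_le_trans ltr01 vW1.
set alpha' := (p * beta' + p') / (q * beta' + q').
have Ediff : alpha - alpha' = (p * q' - p' * q) * (beta - beta') / ((q * beta + q') * (q * beta' + q')).
  by rewrite haeq -/p -/p' -/q -/q' /alpha'; field; rewrite ?beta0 ?P'0 ?P'0' ?d0 ?qb0 ?qb'0 ?D0.
have vdet : v (p * q' - p' * q) = 1 := v_det _.
have vbb' : v (beta - beta') = v beta.
  rewrite addrC vstrict // vN; apply: lt_trans vbeta'1 bigbeta.
have valpha : v (alpha - alpha') = v beta / (v q * v beta * (v (m11 (cm (map e as'))) * v (e (ar - bl)) / v d)).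
  by rewrite Ediff vdiv vM vdet mul1r vbb' vM vqb vqb'.
case: Hconj => [[hK _] | [nK [c1 [c0 [f1 f2 f3]]]]].
  by exfalso; exact: (notK ha Halpha hK).
set C1 := emb c1; set C0 := emb c0.
have iC1 : inK emb C1 by exists c1.
have iC0 : inK emb C0 by exists c0.
have iP : inK emb P by case: (cm_inK bs).
have iP' : inK emb P' by case: (cm_inK bs).
have iQ : inK emb Q by case: (cm_inK bs).
have iQ' : inK emb Q' by case: (cm_inK bs).
have ip : inK emb p by case: (cm_inK (a0 :: as_)).
have ip' : inK emb p' by case: (cm_inK (a0 :: as_)).
have iq : inK emb q by case: (cm_inK (a0 :: as_)).
have iq' : inK emb q' by case: (cm_inK (a0 :: as_)).
set F2 := p * p + C1 * p * q + C0 * q * q.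
set F1 := p * p' + p * p' + C1 * (p * q' + p' * q) + C0 * q * q' + C0 * q * q'.
set F0 := p' * p' + C1 * p' * q' + C0 * q' * q'.
have Fb : F2 * beta ^+ 2 + F1 * beta + F0 = 0.
  have -> : F2 * beta ^+ 2 + F1 * beta + F0 = (alpha ^+ 2 + C1 * alpha + C0) * (q * beta + q') ^+ 2.
    by rewrite haeq -/p -/p' -/q -/q' /F2 /F1 /F0; field; rewrite ?qb0.
  by rewrite f1 mul0r.
set Cc := Q * F1 - F2 * (Q' - P).
set Dd := Q * F0 + F2 * P'.
have lin0 : Cc * beta + Dd = 0.
  have -> : Cc * beta + Dd = Q * (F2 * beta ^+ 2 + F1 * beta + F0) - F2 * (Q * beta ^+ 2 + (Q' - P) * beta - P') by rewrite /Cc /Dd; ring.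
  by rewrite Fb Qb !mulr0 subr0.
have nKb := notK ncfb hbb.
have iF2 : inK emb F2 by rewrite /F2; repeat (first [done | apply: inKD | apply: inKM]).
have iF1 : inK emb F1 by rewrite /F1; repeat (first [done | apply: inKD | apply: inKM]).
have iF0 : inK emb F0 by rewrite /F0; repeat (first [done | apply: inKD | apply: inKM]).
have iCc : inK emb Cc by rewrite /Cc; repeat (first [done | apply: inKD | apply: inKM | apply: inKN]).
have iDd : inK emb Dd by rewrite /Dd; repeat (first [done | apply: inKD | apply: inKM | apply: inKN]).
have [Cc0 Dd0] := lin iCc iDd nKb lin0.
have Fb' : F2 * beta' ^+ 2 + F1 * beta' + F0 = 0.
  have h : Q * (F2 * beta' ^+ 2 + F1 * beta' + F0) = F2 * (Q * beta' ^+ 2 + (Q' - P) * beta' - P') + (Cc * beta' + Dd) by rewrite /Cc /Dd; ring.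
  move: h; rewrite Qb' Cc0 Dd0 mulr0 mul0r !addr0 => /eqP; rewrite mulf_eq0 (negbTE Q0) /=.
  by move/eqP.
have fa' : alpha' ^+ 2 + C1 * alpha' + C0 = 0.
  have h : (alpha' ^+ 2 + C1 * alpha' + C0) * (q * beta' + q') ^+ 2 = F2 * beta' ^+ 2 + F1 * beta' + F0.
    by rewrite /alpha' /F2 /F1 /F0; field; rewrite ?beta0 ?P'0 ?P'0' ?d0 ?qb0 ?qb'0 ?D0.
  move: h; rewrite Fb' => /eqP; rewrite mulf_eq0 expf_eq0 (negbTE qb'0) andbF orbF.
  by move/eqP.
have valpha0 : 0 < v (alpha - alpha').
  rewrite valpha; apply: divr_gt0; first exact: v_gt0 beta0.
  apply: mulr_gt0; first by apply: mulr_gt0 => //; exact: v_gt0 beta0.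
  apply: divr_gt0; last exact: v_gt0 d0.
  apply: mulr_gt0; first exact: cm_v11_gt0 bigAs'.
  exact: lt_le_trans ltr01 vW1.
have ane : alpha' != alpha.
  by rewrite eq_sym -subr_eq0; apply: vpos_neq0.
have Ealphas : alphas = alpha'.
  have h : (alpha' - alpha) * (alpha' + alpha + C1) = 0.
    have -> : (alpha' - alpha) * (alpha' + alpha + C1) =
      (alpha' ^+ 2 + C1 * alpha' + C0) - (alpha ^+ 2 + C1 * alpha + C0) by ring.
    by rewrite fa' f1 subrr.
  move: h => /eqP; rewrite mulf_eq0 subr_eq0 (negbTE ane) /= => /eqP h.
  have -> : alphas = - C1 - alpha by rewrite -f3; ring.
  have -> : alpha' = (alpha' + alpha + C1) - C1 - alpha by ring.
  by rewrite h sub0r.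
rewrite Ealphas valpha.
have vqS : v q = qq ^ (\sum_(x <- as_) pdeg x) by rewrite Eq hA1 prod_pow.
have vA'S : v (m11 (cm (map e as'))) = qq ^ (\sum_(x <- as') pdeg x) by rewrite hA'1 prod_pow.
have vW : v (e (ar - bl)) = qq ^ pdeg (ar - bl) by rewrite ve ?subr_eq0 // exprnP.
have bl0 : bl != 0 by rewrite -size_poly_gt0; apply: ltn_trans nbl.
have vdS : v d = qq ^ pdeg bl by rewrite hdv ve // exprnP.
have ES : \sum_(x <- as_) pdeg x = \sum_(x <- as') pdeg x + pdeg ar by rewrite Eas big_rcons.
rewrite vqS vA'S vW vdS ES.
change (#|F|%:R : R) with qq.
have vb0 : v beta != 0 by rewrite v_neq0.
have nz z : qq ^ z != 0 := expfz_neq0 _ q_neq0.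
set S' := \sum_(x <- as') pdeg x.
have -> : (v beta / (qq ^ (S' + pdeg ar) * v beta * (qq ^ S' * qq ^ pdeg (ar - bl) / qq ^ pdeg bl)))^-1
  = qq ^ (S' + pdeg ar) * qq ^ S' * qq ^ pdeg (ar - bl) * (qq ^ pdeg bl)^-1.
  by field; rewrite ?nz ?vb0.
rewrite invr_expz -!expfzDr ?q_neq0 //; congr (_ ^ _); ring.
Qed.

End Main.

Unset Implicit Arguments.
Set Strict Implicit.

Theorem lemma2p2 (F : finFieldType) (L : fieldType) (R : realType)
  (emb : {rmorphism {fraction {poly F}} -> L}) (av : L -> R)
  (HK : is_Khat emb av)
  (a0 : {poly F}) (as_ bs : seq {poly F})
  (Hr : (1 <= size as_)%N) (Hs : (1 <= size bs)%N)
  (Has : all (@nonconst F) as_) (Hbs : all (@nonconst F) bs)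
  (alpha alphas : L)
  (Halpha : cf_value emb av (pq a0 as_ bs) alpha)
  (Hconj : galois_conj emb alpha alphas)
  (Hne : last 0 as_ != last 0 bs) :
  (av (alpha - alphas))^-1 =
    (#|F|%:R : R) ^ (2 * (\sum_(p <- as_) pdeg p) - pdeg (last 0 as_)
              - pdeg (last 0 bs) + pdeg (last 0 as_ - last 0 bs)).
Proof. exact: (main HK Hr Hs Has Hbs Halpha Hconj Hne). Qed.
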